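(* Let $B = M \cup \{\omega_1,\ldots,\omega_p\}$ with $p\ge1$ and $\omega_i\in P_2\setminus M$, and let $r(B)=\max\{d(\omega_1),\ldots,d(\omega_p)\}$. Then for every finite system $F$ of Boolean functions of variables $x_1,\ldots,x_n$, $$d(F)\le (2r(B)+1)\left(2^{I_B(F)}-1\right).$$
   Context: $P_2$ denotes the set of all Boolean functions and $M\subset P_2$ the set of all monotone Boolean functions (including the constants). Tuples in $\{0,1\}^n$ are compared componentwise. An increasing chain is a sequence of pairwise distinct tuples $\tilde\alpha_1,\ldots,\tilde\alpha_r\in\{0,1\}^n$ with $\tilde\alpha_i\le\tilde\alpha_{i+1}$ for all $i$. For a Boolean function $f$, a pair $(\tilde\alpha,\tilde\beta)$ with $\tilde\alpha\le\tilde\beta$ and $f(\tilde\alpha)>f(\tilde\beta)$ is a jump of $f$; a pair is a jump of a system $F$ if it is a jump of some $f\in F$. For a chain $C=(\tilde\alpha_1,\ldots,\tilde\alpha_r)$, $d_C(F)$ is the number of $i$ with $(\tilde\alpha_i,\tilde\alpha_{i+1})$ a jump of $F$, and $d(F)=\max_C d_C(F)$ over all chains; $d(f)=d(\{f\})$. A circuit over $B$ is a Boolean circuit with inputs $x_1,\ldots,x_n$ whose gates compute functions of $B$; gates computing functions in $M$ have weight $0$ and gates computing some $\omega_i$ have weight $1$. $I_B(F)$ is the minimum total weight of a circuit over $B$ realizing all functions of $F$. *)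

(* Defs.v *)
From mathcomp Require Import all_boot.
Set Implicit Arguments. Unset Strict Implicit. Unset Printing Implicit Defensive.

(* Boolean functions of k variables x_1..x_k (x_i is component i-1 of the tuple). *)
Definition bfun (k : nat) := k.-tuple bool -> bool.

Definition tle {k} (a b : k.-tuple bool) : bool :=
  [forall i : 'I_k, tnth a i ==> tnth b i].

Definition monotone {k} (f : bfun k) : Prop := forall a b, tle a b -> f a ==> f b.

Definition is_jump {k} (f : bfun k) (a b : k.-tuple bool) : bool :=
  [&& tle a b, f a & ~~ f b].

Definition is_jumpF {k} (F : seq (bfun k)) (a b : k.-tuple bool) : bool :=
  has (fun f => is_jump f a b) F.

Definition is_chain {k} (s : seq (k.-tuple bool)) : bool := uniq s && sorted tle s.

Definition dC {k} (F : seq (bfun k)) (s : seq (k.-tuple bool)) : nat :=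
  count (fun ab => is_jumpF F ab.1 ab.2) (zip s (behead s)).

(* d(F) = max over all chains; a chain is duplicate-free, so its length is at most 2^k *)
Definition dsys {k} (F : seq (bfun k)) : nat :=
  \max_(m < (2 ^ k).+1) \max_(s : m.-tuple (k.-tuple bool) | is_chain s) dC F s.

Definition app {k} (f : bfun k) (s : seq bool) : bool :=
  if insub s is Some t then f t else false.

Inductive glabel (p : nat) :=
  | GMon (k : nat) (f : bfun k)
  | GOm (i : 'I_p).

Record gate (p : nat) := Gate { glab : glabel p; gins : seq nat }.

Definition circuit (p : nat) := seq (gate p).

Section Circ.
Variables (p : nat) (ar : 'I_p -> nat) (om : forall i : 'I_p, bfun (ar i)).

Definition garity (g : gate p) : nat :=
  match glab g with GMon k _ => k | GOm i => ar i end.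

Definition glab_ok (l : glabel p) : Prop :=
  match l with GMon k f => monotone f | GOm _ => True end.

(* nodes 0..n-1 are the inputs x_1..x_n; node n+j is the j-th gate, whose
   inputs must be earlier nodes *)
Definition wf_circuit (n : nat) (C : circuit p) : Prop :=
  forall j g, onth C j = Some g ->
    [/\ glab_ok (glab g), size (gins g) = garity g & all (fun m => m < n + j) (gins g)].


Definition eval_gate (g : gate p) (vs : seq bool) : bool :=
  let args := map (fun m => nth false vs m) (gins g) in
  match glab g with GMon k f => app f args | GOm i => @app (ar i) (@om i) args end.

Definition node_vals (n : nat) (C : circuit p) (x : n.-tuple bool) : seq bool :=
  foldl (fun vs g => rcons vs (eval_gate g vs)) (val x) C.

Definition node_fun (n : nat) (C : circuit p) (m : nat) : bfun n :=
  fun x => nth false (node_vals C x) m.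

Definition realizes (n : nat) (C : circuit p) (F : seq (bfun n)) : Prop :=
  forall j, j < size F ->
    exists m, m < n + size C /\ forall x, nth (fun _ => false) F j x = node_fun C m x.

Definition weight (C : circuit p) : nat :=
  count (fun g => if glab g is GOm _ then true else false) C.

Definition IB_is (n : nat) (F : seq (bfun n)) (I : nat) : Prop :=
  (exists C, [/\ wf_circuit n C, realizes C F & weight C = I]) /\
  (forall C, wf_circuit n C -> realizes C F -> I <= weight C).

Definition rB : nat := \max_(i < p) dsys [:: @om i].
End Circ.

(* Main.v *)
Require Import Defs.
From mathcomp Require Import all_boot.
From mathcomp Require Import zify.
Set Implicit Arguments. Unset Strict Implicit. Unset Printing Implicit Defensive.


Fixpoint cp {T : Type} (P : T -> T -> bool) (x : T) (t : seq T) : nat :=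
  match t with [::] => 0 | y :: t' => P x y + cp P y t' end.

Definition cps {T : Type} (P : T -> T -> bool) (s : seq T) : nat :=
  if s is x :: t then cp P x t else 0.

Lemma cp_count {T : Type} (P : T -> T -> bool) x t :
  count (fun ab => P ab.1 ab.2) (zip (x :: t) t) = cp P x t.
Proof. by elim: t x => [|y t IH] x //=; rewrite IH. Qed.

Lemma cp_le {T : Type} (P Q : T -> T -> bool) x t :
  (forall a b, P a b -> Q a b) -> cp P x t <= cp Q x t.
Proof.
move=> H; elim: t x => [|y t IH] x //=; apply: leq_add => //.
by case: (P x y) (H x y) => // ->.
Qed.

Lemma cp_le3 {T : Type} (P Q1 Q2 Q3 : T -> T -> bool) x t :
  (forall a b, P a b <= Q1 a b + Q2 a b + Q3 a b) ->
  cp P x t <= cp Q1 x t + cp Q2 x t + cp Q3 x t.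
Proof.
move=> H; elim: t x => [|y t IH] x //=.
have := H x y; have := IH y; lia.
Qed.

Lemma cp_path {T : Type} (R P : T -> T -> bool) x t :
  path R x t -> cp (fun a b => R a b && P a b) x t = cp P x t.
Proof. by elim: t x => [|y t IH] x //= /andP[-> /IH ->]. Qed.

Lemma cps_cp {T : Type} (P : T -> T -> bool) x l : cps P l <= cp P x l.
Proof. by case: l => //= z l; apply: leq_addl. Qed.

Lemma cp_filter {T : Type} (q : pred T) (P : T -> T -> bool) t :
  forall x,
  (q x -> cp (fun a b => [&& q a, q b & P a b]) x t <= cp P x (filter q t)) /\
  (~~ q x -> cp (fun a b => [&& q a, q b & P a b]) x t <= cps P (filter q t)).
Proof.
elim: t => [|y t IH] x /=; first by split.
case qy: (q y) => /=; have [IHA IHB] := IH y.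
  split=> qx.
    by rewrite qx /=; apply: leq_add => //; exact: IHA.
  by rewrite (negbTE qx) /=; exact: IHA.
rewrite !andbF /=; have nqy : ~~ q y by rewrite qy.
split=> qx; last exact: IHB.
apply: leq_trans (IHB nqy) _; exact: cps_cp.
Qed.

Lemma cp_filter' {T : Type} (q : pred T) (P : T -> T -> bool) x t :
  cp (fun a b => [&& q a, q b & P a b]) x t <= cps P (filter q (x :: t)).
Proof.
have [A B] := cp_filter q P t x; rewrite /=; case qx: (q x).
  exact: A. by apply: B; rewrite qx.
Qed.

Lemma rise_drop (G : bool) t : forall b : bool,
  cp (fun a c => ~~ a && c) b t + b = cp (fun a c => a && ~~ c) b t + last b t.
Proof. elim: t => [|c t IH] b //=; have := IH c; case: b; case: c => /=; lia. Qed.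

Lemma neq_bound {T : Type} (G : T -> bool) x t :
  cp (fun a b => G a != G b) x t <= 2 * cp (fun a b => G a && ~~ G b) x t + 1.
Proof.
have E1 : cp (fun a b => G a != G b) x t =
   cp (fun a b => ~~ G a && G b) x t + cp (fun a b => G a && ~~ G b) x t.
  elim: t x => [|y t IH] x //=; rewrite IH; case: (G x); case: (G y) => /=; lia.
have E2 : forall (u : seq T) y, cp (fun a b => ~~ G a && G b) y u + G y =
   cp (fun a b => G a && ~~ G b) y u + G (last y u).
  elim=> [|z u IH] y //=; have := IH z; case: (G y); case: (G z) => /=; lia.
have := E2 t x; rewrite E1; case: (G x); case: (G (last x t)) => /=; lia.
Qed.

Lemma tle_refl k (a : k.-tuple bool) : tle a a.
Proof. by apply/forallP => i; apply: implybb. Qed.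

Lemma tle_trans k : transitive (@tle k).
Proof.
move=> b a c /forallP H1 /forallP H2; apply/forallP => i.
by apply/implyP => /(implyP (H1 i)) /(implyP (H2 i)).
Qed.

Lemma tle_anti k (a b : k.-tuple bool) : tle a b -> tle b a -> a = b.
Proof.
move=> /forallP H1 /forallP H2; apply: eq_from_tnth => i.
by move: (H1 i) (H2 i); case: (tnth a i); case: (tnth b i).
Qed.

Definition tlt k (a b : k.-tuple bool) := tle a b && (a != b).

Lemma tlt_trans k : transitive (@tlt k).
Proof.
move=> b a c /andP[ab nab] /andP[bc nbc]; apply/andP; split.
  exact: tle_trans bc.
apply/eqP => E; subst c; by rewrite (tle_anti ab bc) eqxx in nab.
Qed.

Lemma tlt_irr k : irreflexive (@tlt k).
Proof. by move=> a; rewrite /tlt eqxx andbF. Qed.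

Fixpoint sqt {T : eqType} (x : T) (t : seq T) : seq T :=
  match t with [::] => [::] | y :: t' => if x == y then sqt y t' else y :: sqt y t' end.

Lemma cp_sqt {T : eqType} (J : T -> T -> bool) x t :
  (forall a, J a a = false) -> cp J x t = cp J x (sqt x t).
Proof.
move=> Jirr; elim: t x => [|y t IH] x //=.
case: eqP => [<-|_] /=; by rewrite IH ?Jirr.
Qed.

Lemma path_sqt k (x : k.-tuple bool) t : path tle x t -> path (@tlt k) x (sqt x t).
Proof.
elim: t x => [|y t IH] x //= /andP[xy /IH P].
case: eqP => [E|ne] /=; first by subst.
rewrite P andbT /tlt xy /=; apply/eqP => E; exact: ne.
Qed.

Lemma drop_dsys k (f : bfun k) x t :
  path tle x t -> cp (fun a b => f a && ~~ f b) x t <= dsys [:: f].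
Proof.
move=> P.
have Jirr : forall a, f a && ~~ f a = false by move=> a; case: (f a).
rewrite (cp_sqt _ _ Jirr).
have P' := path_sqt P.
rewrite -(cp_path (R := tle)); last by apply: (sub_path _ P') => a b /andP[].
set s := x :: sqt x t.
have us : uniq s by apply: (sorted_uniq (@tlt_trans k) (@tlt_irr k)).
have ss : sorted tle s by apply: (sub_path _ P') => a b /andP[].
have szs : size s < (2 ^ k).+1.
  rewrite ltnS -(card_uniqP us).
  apply: leq_trans (max_card _) _; by rewrite card_tuple card_bool.
rewrite /dsys.
apply: leq_trans _ (leq_bigmax (Ordinal szs)) => /=.
have ch : is_chain (in_tuple s) by rewrite /is_chain us ss.
apply: leq_trans _ (leq_bigmax_cond (in_tuple s) ch).
rewrite /dC /= (cp_count (fun a b => is_jumpF [:: f] a b)); apply: cp_le => a b.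
by rewrite /is_jumpF /= orbF /is_jump.
Qed.

Definition isOm p (g : gate p) : bool := if glab g is GOm _ then true else false.

Definition tin k (ins : seq nat) (V : seq bool) : k.-tuple bool :=
  insubd (nseq_tuple k false) (map (fun m => nth false V m) ins).

Lemma app_tin k (f : bfun k) ins V : size ins = k ->
  app f (map (fun m => nth false V m) ins) = f (tin k ins V).
Proof.
move=> sz; rewrite /app /tin /insubd.
case: insubP => [u _ _|] //=; by rewrite size_map sz eqxx.
Qed.

Lemma tle_tin k ins V1 V2 : size ins = k ->
  (forall m, nth false V1 m ==> nth false V2 m) -> tle (tin k ins V1) (tin k ins V2).
Proof.
move=> sz H; apply/forallP => i.
have P1 : forall V, size (map (fun m => nth false V m) ins) == k by move=> V; rewrite size_map sz.
rewrite !(tnth_nth false) /tin !insubdK ?inE ?P1 //.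
rewrite !(nth_map 0) ?sz //. all: try exact: H; exact: P1.
Qed.

Lemma foldl_rc_size (h : seq bool -> bool) (l : seq nat) : True. Proof. by []. Qed.

Lemma size_nv p ar (om : forall i : 'I_p, bfun (ar i)) n (C : circuit p) (x : n.-tuple bool) :
  size (node_vals om C x) = n + size C.
Proof.
rewrite /node_vals; elim/last_ind: C => [|C g IH]; first by rewrite size_tuple addn0.
by rewrite foldl_rcons size_rcons IH size_rcons addnS.
Qed.

Lemma nv_rcons p ar (om : forall i : 'I_p, bfun (ar i)) n (C : circuit p) g (x : n.-tuple bool) :
  node_vals om (rcons C g) x = rcons (node_vals om C x) (eval_gate om g (node_vals om C x)).
Proof. by rewrite /node_vals foldl_rcons. Qed.

Lemma nv_cat p ar (om : forall i : 'I_p, bfun (ar i)) n (C1 C2 : circuit p) g (x : n.-tuple bool) :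
  node_vals om (C1 ++ g :: C2) x =
  foldl (fun vs g => rcons vs (eval_gate om g vs))
     (rcons (node_vals om C1 x) (eval_gate om g (node_vals om C1 x))) C2.
Proof. by rewrite /node_vals foldl_cat. Qed.

Lemma wf_rcons p ar n (C : circuit p) g : wf_circuit ar n (rcons C g) ->
  wf_circuit ar n C /\
  [/\ glab_ok (glab g), size (gins g) = garity ar g & all (fun m => m < n + size C) (gins g)].
Proof.
move=> W; split.
  move=> j h E; apply: W; rewrite -cats1 onth_cat.
  by have := onthTE C j; rewrite E => <-.
apply: W; rewrite -cats1 onth_cat ltnn subnn //.
Qed.

Lemma mono_nv p ar (om : forall i : 'I_p, bfun (ar i)) n (C : circuit p) (a b : n.-tuple bool) :
  wf_circuit ar n C -> all (fun g => ~~ isOm g) C -> tle a b ->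
  forall m, nth false (node_vals om C a) m ==> nth false (node_vals om C b) m.
Proof.
move=> + + ab; elim/last_ind: C => [|C g IH].
  move=> _ _ m /=; case: (ltnP m n) => mn.
    rewrite -!(tnth_nth false a (Ordinal mn)) -(tnth_nth false b (Ordinal mn)).
    by move/forallP: ab => /(_ (Ordinal mn)).
  by rewrite !nth_default ?size_tuple.
move=> /wf_rcons [W [ok sz _]]; rewrite all_rcons => /andP[ng aC] m.
rewrite !nv_rcons !nth_rcons !size_nv.
case: ltnP => _; first exact: IH.
case: eqP => // _.
rewrite /eval_gate; move: ng ok sz; rewrite /isOm /garity.
case: (glab g) => // k f _ /= mf sz.
rewrite !app_tin //; apply: mf; apply: tle_tin => //; exact: IH.
Qed.

Definition bad p ar (om : forall i : 'I_p, bfun (ar i)) n (C : circuit p) (a b : n.-tuple bool) :=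
  has (fun m => node_fun om C m a && ~~ node_fun om C m b) (iota 0 (n + size C)).

Definition cg p (c : bool) : gate p := Gate (@GMon p 0 (fun _ : 0.-tuple bool => c)) [::].

Lemma decomp p (C : circuit p) : 0 < weight C ->
  exists pre g post, [/\ C = pre ++ g :: post, all (fun g => ~~ isOm g) pre & isOm g].
Proof.
elim: C => [|h C IH] //=.
case hh: (if glab h is GOm _ then true else false) => /=.
  by move=> _; exists [::], h, C; split.
move=> /IH [pre [g [post [-> A G]]]]; exists (h :: pre), g, post; split => //=.
by rewrite A andbT /isOm hh.
Qed.

Lemma weight_cat p (pre post : circuit p) g :
  weight (pre ++ g :: post) = weight pre + isOm g + weight post.
Proof. by rewrite /weight count_cat /= addnA. Qed.

Lemma eval_cg p ar (om : forall i : 'I_p, bfun (ar i)) c vs : eval_gate om (cg p c) vs = c.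
Proof. rewrite /eval_gate /= /app; case: insubP => //=. Qed.

Lemma wf_split p ar n (pre post : circuit p) g : wf_circuit ar n (pre ++ g :: post) ->
  [/\ wf_circuit ar n pre,
      [/\ glab_ok (glab g), size (gins g) = garity ar g & all (fun m => m < n + size pre) (gins g)]
    & forall c, wf_circuit ar n (pre ++ cg p c :: post)].
Proof.
move=> W; split.
- move=> j h E; apply: W; rewrite onth_cat.
  by have := onth_default; have := onthTE pre j; rewrite E => <-.
- by apply: W; rewrite onth_cat ltnn subnn.
- move=> c j h; rewrite onth_cat; case: ltnP => jl.
    by move=> E; apply: W; rewrite onth_cat jl.
  case E: (j - size pre) => [|k] /=.
    move=> [<-] /=; split => //; by move=> a b _; apply: implybb.
  by move=> E2; apply: W; rewrite onth_cat ltnNge jl /= E.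
Qed.

Lemma nv_eq p ar (om : forall i : 'I_p, bfun (ar i)) n (pre post : circuit p) g c (x : n.-tuple bool) :
  eval_gate om g (node_vals om pre x) = c ->
  node_vals om (pre ++ g :: post) x = node_vals om (pre ++ cg p c :: post) x.
Proof. by move=> E; rewrite !nv_cat E eval_cg. Qed.

Lemma cp_map {T U : Type} (f : T -> U) (P : U -> U -> bool) x t :
  cp P (f x) (map f t) = cp (fun a b => P (f a) (f b)) x t.
Proof. by elim: t x => [|y t IH] x //=; rewrite IH. Qed.

Lemma bad_eq p ar (om : forall i : 'I_p, bfun (ar i)) n (C1 C2 : circuit p) (a b : n.-tuple bool) :
  size C1 = size C2 -> node_vals om C1 a = node_vals om C2 a ->
  node_vals om C1 b = node_vals om C2 b -> bad om C1 a b = bad om C2 a b.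
Proof. by move=> s ea eb; rewrite /bad /node_fun s ea eb. Qed.

Lemma cp_false {T : Type} (P : T -> T -> bool) x t :
  (forall a b, P a b = false) -> cp P x t = 0.
Proof. by move=> H; elim: t x => [|y t IH] x //=; rewrite H IH. Qed.

Lemma weight0 p (l : circuit p) : all (fun g => ~~ isOm g) l -> weight l = 0.
Proof. by elim: l => [|h l IH] //= /andP[nh /IH]; rewrite /weight /= => ->; move: nh; rewrite /isOm; case: (glab h). Qed.

Lemma eq_cp {T : Type} (P Q : T -> T -> bool) x t :
  (forall a b, P a b = Q a b) -> cp P x t = cp Q x t.
Proof. by move=> H; elim: t x => [|y t IH] x //=; rewrite H IH. Qed.

Lemma main_bound p ar (om : forall i : 'I_p, bfun (ar i)) n w : forall (C : circuit p),
  wf_circuit ar n C -> weight C = w -> forall s : seq (n.-tuple bool), sorted tle s ->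
  cps (bad om C) s <= (2 * rB om + 1) * (2 ^ w - 1).
Proof.
elim: w => [|w IH] C W wt [|x t] //= P.
  have aC : all (fun g => ~~ isOm g) C.
    by rewrite all_predC has_count; move: wt; rewrite /weight /isOm => ->.
  rewrite -(cp_path (R := tle)) //.
  have -> : cp (fun a b => tle a b && bad om C a b) x t = cp (fun _ _ => false) x t.
    apply/eqP; rewrite eqn_leq; apply/andP; split; apply: cp_le => // a b /andP[ab].
    move/hasP => [m _ /andP[ma nmb]].
    by have := mono_nv om W aC ab m; rewrite /node_fun in ma nmb; rewrite ma (negbTE nmb).
  by rewrite cp_false.
have /decomp [pre [g [post [EC Apre Og]]]] : 0 < weight C by rewrite wt.
rewrite EC in W wt *; clear EC.
have [Wpre [okg szg _] Wc] := wf_split W.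
set G := fun a : n.-tuple bool => eval_gate om g (node_vals om pre a).
set C0 := pre ++ cg p false :: post.
set C1 := pre ++ cg p true :: post.
have wc : forall c, weight (pre ++ cg p c :: post) = w.
  move=> c; move: wt; rewrite !weight_cat Og /=.
  rewrite (weight0 Apre).
  lia.
move: Og okg szg; rewrite /isOm /garity.
case Eg: (glab g) => [k f|i] // _ _ szg.
have GE : forall a, G a = om i (tin (ar i) (gins g) (node_vals om pre a)).
  by move=> a; rewrite /G /eval_gate Eg app_tin // szg.
have szc : forall c, size (pre ++ g :: post) = size (pre ++ cg p c :: post).
  by move=> c; rewrite !size_cat.
set q0 := fun a => ~~ G a.
set q1 := fun a => G a.
have S3 : cp (bad om (pre ++ g :: post)) x t <=
   cp (fun a b => [&& q0 a, q0 b & bad om C0 a b]) x t +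
   cp (fun a b => [&& q1 a, q1 b & bad om C1 a b]) x t +
   cp (fun a b => G a != G b) x t.
  apply: cp_le3 => a b; rewrite /q0 /q1.
  case Ga: (G a); case Gb: (G b) => /=; rewrite ?addn0 ?add0n ?leq_b1 //.
    by rewrite (bad_eq (szc true) (nv_eq post Ga) (nv_eq post Gb)).
  by rewrite (bad_eq (szc false) (nv_eq post Ga) (nv_eq post Gb)).
apply: leq_trans S3 _.
have so : sorted tle (x :: t) by [].
have B0 := leq_trans (cp_filter' q0 (bad om C0) x t)
   (IH C0 (Wc false) (wc false) _ (sorted_filter (@tle_trans n) q0 so)).
have B1 := leq_trans (cp_filter' q1 (bad om C1) x t)
   (IH C1 (Wc true) (wc true) _ (sorted_filter (@tle_trans n) q1 so)).
have B2 : cp (fun a b => G a && ~~ G b) x t <= rB om.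
  pose T := fun a : n.-tuple bool => tin (ar i) (gins g) (node_vals om pre a).
  have -> : cp (fun a b => G a && ~~ G b) x t = cp (fun u v => om i u && ~~ om i v) (T x) (map T t).
    by rewrite cp_map; apply: eq_cp => a b; rewrite !GE.
  apply: (@leq_trans (dsys [:: om i])).
    apply: drop_dsys; rewrite path_map; apply: (sub_path _ P) => a b ab /=.
    apply: tle_tin => //.
    move=> m; have H := mono_nv om Wpre Apre ab m. exact H.
  rewrite /rB; exact: (leq_bigmax i).
have B3 := neq_bound G x t.
set R := rB om in B2 B0 B1 *.
have e0 : 0 < 2 ^ w by rewrite expn_gt0.
rewrite expnS; move: B0 B1 B2 B3 e0; set e := 2 ^ w; nia.
Qed.

Theorem lemma1 (p : nat) (ar : 'I_p -> nat) (om : forall i : 'I_p, bfun (ar i))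
  (hp : 0 < p) (hom : forall i : 'I_p, ~ monotone (om i))
  (n : nat) (F : seq (bfun n)) (I : nat) (hI : IB_is om F I) :
  dsys F <= (2 * rB om + 1) * (2 ^ I - 1).
Proof.
have [[C [W R wt]] _] := hI.
apply/bigmax_leqP => m _; apply/bigmax_leqP => s /andP[_ ss].
case: s ss => [[|x t] /= _] ss; first by rewrite /dC.
rewrite /dC /= (cp_count (fun a b => is_jumpF F a b)).
apply: leq_trans _ (main_bound om W wt (s := x :: t) ss).
rewrite /=; apply: cp_le => a b /= /(has_nthP (fun _ => false)) [j jF J].
have [k [kC Hk]] := R _ jF.
apply/hasP; exists k; first by rewrite mem_iota.
move: J; rewrite /is_jump !Hk => /and3P[_ -> ->] //.
Qed.
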